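(* Let $G$ be a locally compact Hausdorff group, $H,K$ closed subgroups of $G$, and $N$ the normalizer of $K$ in $G$. If $\mu$ is an $N$-strongly quasi-invariant measure on $K\backslash G/H$ which arises from a rho-function, then $\operatorname{supp}\mu=K\backslash G/H$.
   Context: $dx,dh,dk$ are left Haar measures on $G,H,K$ with modular functions $\Delta_G,\Delta_H,\Delta_K$. $N=\{g\in G: gK=Kg\}$. $K\backslash G/H=\{KxH\}$ carries the quotient topology from $q(x)=KxH=:\ddot x$; $N$ acts on it by $n\cdot KxH=KnxH$. A rho-function for $(K,G,H)$ is a non-negative locally integrable $\rho$ on $G$ with $\rho(kxh)=\frac{\Delta_K(k)\Delta_H(h)}{\Delta_G(h)}\rho(x)$. For a positive Radon measure $\mu$ on $K\backslash G/H$ and $n\in N$, $\mu_n(E)=\mu(n\cdot E)$; $\mu$ is $N$-strongly quasi-invariant if there is a continuous positive $\lambda$ on $N\times K\backslash G/H$ with $d\mu_n=\lambda(n,\cdot)\,d\mu$ for all $n\in N$. $\mu$ arises from a rho-function if there is a rho-function $\rho:G\to(0,+\infty)$ with $\int_{K\backslash G/H}\int_K\int_H f(k^{-1}xh)\,dh\,dk\,d\mu(\ddot x)=\int_G f(x)\rho(x)\,dx$ for all $f\in C_c(G)$. *)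

(* Defs.v *)
From HB Require Import structures.
From mathcomp Require Import all_boot all_order all_algebra.
From mathcomp Require Import all_classical all_reals all_analysis.
Set Implicit Arguments. Unset Strict Implicit. Unset Printing Implicit Defensive.
Import Order.TTheory GRing.Theory Num.Theory numFieldNormedType.Exports.
Local Open Scope classical_set_scope.
Local Open Scope ring_scope.

Notation BorelT T := (g_sigma_algebraType (@open T)).

Definition is_group {G : Type} (mul : G -> G -> G) (inv : G -> G) (e : G) :=
  [/\ (forall x y z, mul x (mul y z) = mul (mul x y) z),
      (forall x, mul e x = x /\ mul x e = x) &
      (forall x, mul (inv x) x = e /\ mul x (inv x) = e)].

Definition is_LCH_group (G : topologicalType) (mul : G -> G -> G) (inv : G -> G) (e : G) :=
  [/\ is_group mul inv e,
      continuous (fun p : G * G => mul p.1 p.2),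
      continuous inv,
      hausdorff_space G &
      (forall x : G, exists C : set G, compact C /\ nbhs x C)].

Definition is_closed_subgroup (G : topologicalType) (mul : G -> G -> G) (inv : G -> G) (e : G)
  (H : set G) :=
  [/\ H e, (forall x y, H x -> H y -> H (mul x y)), (forall x, H x -> H (inv x)) & closed H].

Definition normalizer {G : Type} (mul : G -> G -> G) (K : set G) : set G :=
  [set g | mul g @` K = (fun k => mul k g) @` K].

Definition radon_measure {R : realType} (T : ptopologicalType)
  (mu : set (BorelT T) -> \bar R) :=
  [/\ (forall C : set T, compact C -> measurable (C : set (BorelT T)) -> (mu C < +oo)%E),
      (forall B : set (BorelT T), measurable B ->
          mu B = ereal_inf [set mu U | U in [set U : set T | open U /\ B `<=` U]]) &
      (forall U : set T, open U ->
          mu U = ereal_sup [set mu C | C in [set C : set T |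
                    [/\ compact C, measurable (C : set (BorelT T)) & C `<=` U]]])].

(* A left Haar measure of the closed subgroup H of G, viewed as a (Radon)
   measure on G concentrated on H (i.e. the push-forward by the inclusion).
   With H = setT this is a left Haar measure of G. *)
Definition left_haar_on {R : realType} (G : ptopologicalType) (mul : G -> G -> G)
  (H : set G) (nu : set (BorelT G) -> \bar R) :=
  [/\ nu (~` H) = 0%E,
      radon_measure nu,
      (forall h (B : set (BorelT G)), H h -> measurable B -> nu (mul h @` B) = nu B) &
      (forall U : set G, open U -> (U `&` H) !=set0 -> (0 < nu U)%E)].

Definition modular_function_of {R : realType} (G : ptopologicalType) (mul : G -> G -> G)
  (H : set G) (nu : set (BorelT G) -> \bar R) (Delta : G -> R) :=
  forall h (B : set (BorelT G)), H h -> measurable B ->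
    nu ((fun x => mul x h) @` B) = ((Delta h)%:E * nu B)%E.

Definition rho_function {R : realType} (G : ptopologicalType) (mul : G -> G -> G)
  (K H : set G) (dx : {measure set (BorelT G) -> \bar R}) (DG DH DK : G -> R)
  (rho : G -> R) :=
  [/\ (forall x, 0 <= rho x),
      measurable_fun setT (rho : BorelT G -> R),
      (forall C : set G, compact C -> dx.-integrable (C : set (BorelT G)) (EFin \o rho)) &
      (forall k x h, K k -> H h ->
          rho (mul (mul k x) h) = DK k * DH h / DG h * rho x)].

Definition Cc {R : realType} (G : topologicalType) (f : G -> R) :=
  continuous f /\ compact (closure [set x | f x != 0]).

Definition qrepr (G : ptopologicalType) (X : Type) (q : G -> X) (z : X) : G :=
  xget point (q @^-1` [set z]).

Definition arises_from_rho {R : realType} (G : ptopologicalType) (mul : G -> G -> G)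
  (inv : G -> G) (K H : set G) (dx dh dk : {measure set (BorelT G) -> \bar R})
  (DG DH DK : G -> R) (X : ptopologicalType) (q : G -> X)
  (mu : {measure set (BorelT X) -> \bar R}) :=
  exists rho : G -> R, [/\ (forall x, 0 < rho x),
    rho_function mul K H dx DG DH DK rho &
    (forall f : G -> R, Cc f ->
       (\int[mu]_z (\int[dk]_k (\int[dh]_h
            (f (mul (mul (inv k) (qrepr q z)) h))%:E)))%E
       = (\int[dx]_x (f x * rho x)%:E)%E)].

Definition act_set (G : Type) (X : Type) (mul : G -> G -> G) (q : G -> X) (n : G)
  (E : set X) : set X := [set q (mul n x) | x in q @^-1` E].

Definition strongly_quasi_invariant {R : realType} (G : ptopologicalType)
  (mul : G -> G -> G) (N : set G) (X : ptopologicalType) (q : G -> X)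
  (mu : {measure set (BorelT X) -> \bar R}) :=
  exists lambda : G -> X -> R,
    [/\ {within [set p : G * X | N p.1], continuous (fun p : G * X => lambda p.1 p.2)},
        (forall n z, N n -> 0 < lambda n z) &
        (forall n (E : set (BorelT X)), N n -> measurable E ->
           mu (act_set mul q n E) = (\int[mu]_(z in E) (lambda n z)%:E)%E)].

Definition msupport {R : realType} (X : ptopologicalType) (mu : set (BorelT X) -> \bar R)
  : set X :=
  ~` \bigcup_(U in [set U : set X | open U /\ mu U = 0%E]) U.

(* Main.v *)
Require Import Defs.
From HB Require Import structures.
From mathcomp Require Import all_boot all_order all_algebra.
From mathcomp Require Import all_classical all_reals all_analysis.
Local Open Scope classical_set_scope.
Local Open Scope ring_scope.

From mathcomp Require Import measurable_realfun.
Set Implicit Arguments. Unset Strict Implicit. Unset Printing Implicit Defensive.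
Import Order.TTheory GRing.Theory Num.Theory numFieldNormedType.Exports.
Import HBNNSimple.

Lemma open_borel (G : ptopologicalType) (U : set G) : open U ->
  measurable (U : set (BorelT G)).
Proof. by move=> oU; apply: sub_sigma_algebra. Qed.

Lemma cont_borel (R : realType) (G : ptopologicalType) (f : G -> R) :
  continuous f -> measurable_fun setT (f : BorelT G -> R).
Proof.
move=> /continuousP cf; apply: (measurability _ (RGenOpens.measurableE R)).
move=> _ [_ [a [b ->] <-]]; rewrite setTI; apply: open_borel.
exact/cf/interval_open.
Qed.

Lemma null_integral0 d (T : measurableType d) (R : realType)
  (m : {measure set T -> \bar R}) (N : set T) (f : T -> \bar R) :
  measurable N -> m N = 0%E -> (forall x, ~ N x -> f x = 0%E) ->
  (\int[m]_x f x = 0)%E.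
Proof.
move=> mN mN0 fN.
have key : forall g : T -> \bar R, (forall x, 0 <= g x)%E ->
    (forall x, ~ N x -> g x = 0%E) -> (\int[m]_x g x = 0)%E.
  move=> g g0 gN; apply/eqP; rewrite eq_le integral_ge0 ?andbT//.
  rewrite ge0_integralTE//; apply/ge_ereal_sup => _ [h /= hg <-].
  have := @integral_nnsfun _ _ _ m setT measurableT h; rewrite patch_setT => <-.
  have -> : (\int[m]_x (h x)%:E = \int[m]_(x in N) (h x)%:E)%E.
    rewrite [RHS]integral_mkcond; apply: eq_integral => x _.
    rewrite /patch; case: ifPn => // /negP; rewrite inE => Nx.
    have := hg x; rewrite gN// lee_fin => hx0.
    by apply/eqP; rewrite eq_le lee_fin hx0 lee_fin fun_ge0.
  rewrite null_set_integral//.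
  by apply/measurable_EFinP; exact: measurable_funP.
rewrite integralE (key (fun x => (f^\+ x)%E)) ?(key (fun x => (f^\- x)%E)) ?subee//.
all: try (by move=> x; exact: funepos_ge0).
all: try (by move=> x; exact: funeneg_ge0).
all: try (by move=> x Nx; rewrite funenegE fN// oppe0 maxxx).
all: try (by move=> x Nx; rewrite funeposE fN// maxxx).
Qed.


Lemma bump (R : realType) (G : ptopologicalType) (hs : hausdorff_space G)
  (lc : forall x : G, exists C : set G, compact C /\ nbhs x C)
  (V : set G) (x0 : G) : open V -> V x0 ->
  exists g : G -> R, [/\ Cc g, (forall x, 0 <= g x), g x0 = 1 &
     forall x, ~ V x -> g x = 0].
Proof.
move=> oV Vx0.
have lcG : locally_compact [set: G].
  move=> x _; rewrite withinET; have [C [cC nC]] := lc x.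
  by exists C => //; split => //; exact: compact_closed.
have [C [cC nC]] := lc x0.
have clC : closed C := compact_closed hs cC.
have : nbhs x0 (V `&` C) by apply: filterI => //; exact: open_nbhs_nbhs.
rewrite nbhsE => -[W [oW Wx0] WVC].
have crs := @locally_compact_completely_regular G R lcG hs.
have sep : uniform_separator [set x0] (~` W).
  by apply: crs; [exact: open_closedC | by []].
have [f [cf f01 fx0 fW]] := (@uniform_separatorP G R _ _).1 sep.
have f0 : f x0 = 0 by apply: fx0; exists x0.
have f1 x : ~ W x -> f x = 1 by move=> nW; apply: fW; exists x.
have fle1 x : f x <= 1.
  by have := f01 (f x) (ex_intro2 _ _ x I erefl); rewrite /= in_itv /= => /andP[].
exists (fun x => 1 - f x); split.
- split.
    by move=> x; apply: cvgB; [exact: cvg_cst | exact: cf].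
  apply: (subclosed_compact _ cC); first exact: closed_closure.
  have -> : C = closure C by apply/closure_id.
  apply: closureS => x /= nz; apply: contrapT => nCx; move: nz.
  by rewrite f1 ?subrr ?eqxx// => /WVC [].
- by move=> x; rewrite subr_ge0.
- by rewrite f0 subr0.
- by move=> x nV; rewrite f1 ?subrr // => /WVC [].
Qed.

Theorem proposition4p6 (R : realType) (G : ptopologicalType)
  (mul : G -> G -> G) (inv : G -> G) (e : G)
  (hG : is_LCH_group mul inv e)
  (H K : set G)
  (hH : is_closed_subgroup mul inv e H) (hK : is_closed_subgroup mul inv e K)
  (dx dh dk : {measure set (BorelT G) -> \bar R})
  (hdx : left_haar_on mul setT dx) (hdh : left_haar_on mul H dh)
  (hdk : left_haar_on mul K dk)
  (DG DH DK : G -> R)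
  (hDG : modular_function_of mul setT dx DG) (hDH : modular_function_of mul H dh DH)
  (hDK : modular_function_of mul K dk DK)
  (X : ptopologicalType) (q : G -> X)
  (hq_surj : forall z : X, exists x : G, q x = z)
  (hq_fib : forall x y : G, q x = q y <-> exists k h, [/\ K k, H h & y = mul (mul k x) h])
  (hq_top : forall U : set X, open U <-> open (q @^-1` U))
  (mu : {measure set (BorelT X) -> \bar R})
  (hmu : radon_measure mu)
  (hsqi : strongly_quasi_invariant mul (normalizer mul K) q mu)
  (hrho : arises_from_rho mul inv K H dx dh dk DG DH DK q mu) :
  msupport mu = setT.
Proof.
have [_ _ _ hs lc] := hG.
have [_ _ _ clH] := hH; have [_ _ invK clK] := hK.
rewrite /msupport; apply/seteqP; split => // z _ [U [oU muU0] Uz].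
have [x0 qx0] := hq_surj z.
pose V := q @^-1` U.
have oV : open V by apply/hq_top.
have Vx0 : V x0 by rewrite /V /preimage /= qx0.
have [g [[cg cpg] g0 gx0 gV]] := @bump R G hs lc V x0 oV Vx0.
case: hrho => rho [rho_pos [_ mrho _ _] hint].
have := hint g (conj cg cpg).
have -> : (\int[mu]_z (\int[dk]_k (\int[dh]_h
            (g (mul (mul (inv k) (qrepr q z)) h))%:E)) = 0)%E.
  apply: (@null_integral0 _ _ _ mu U) => //; first exact: open_borel.
  move=> w nUw.
  apply: (@null_integral0 _ _ _ dk (~` K)).
  - by apply: open_borel; apply: closed_openC.
  - by case: hdk.
  move=> k /contrapT Kk.
  apply: (@null_integral0 _ _ _ dh (~` H)).
  - by apply: open_borel; apply: closed_openC.
  - by case: hdh.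
  move=> h /contrapT Hh.
  have qr : q (qrepr q w) = w := xgetPex point (hq_surj w).
  have qm : q (qrepr q w) = q (mul (mul (inv k) (qrepr q w)) h).
    by apply/hq_fib; exists (inv k), h; split => //; exact: invK.
  rewrite gV//; rewrite /V /preimage /= -qm qr; exact: nUw.
move=> /esym RHS0.
have mF : measurable_fun setT (fun x : BorelT G => (g x * rho x)%:E).
  by apply/measurable_EFinP; apply: measurable_funM => //; exact: cont_borel.
have : (\int[dx]_x `|(g x * rho x)%:E| = 0)%E.
  rewrite -RHS0; apply: eq_integral => x _; rewrite gee0_abs// lee_fin.
  by rewrite mulr_ge0// ltW.
move=> /(ae_eq_integral_abs _ measurableT mF) [N [mN dxN0 sub]].
pose O := g @^-1` `]0, +oo[.
have oO : open O by apply: (continuousP _).1 => //; exact: interval_open.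
have Ox0 : O x0 by rewrite /O /preimage /= gx0 in_itv /= andbT ltr01.
have ON : O `<=` N.
  move=> x; rewrite /O /preimage /= in_itv /= andbT => gx.
  apply: sub => /= /(_ I) [] /eqP; rewrite mulf_eq0 => /orP[] /eqP h0.
  - by move: gx; rewrite h0 ltxx.
  - by have := rho_pos x; rewrite h0 ltxx.
have : (0 < dx O)%E by case: hdx => _ _ _; apply => //; exists x0.
have mO : measurable (O : set (BorelT G)) by exact: open_borel.
have := @le_measure _ _ _ dx O N; rewrite !inE => /(_ mO mN ON).
move=> h1 h2; have := lt_le_trans h2 h1.
by rewrite lt_neqAle => /andP[/eqP + _]; apply.
Qed.
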